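(* Let $n$ be a positive integer and $\mathbf a\in\mathbb N^n$. For each $\mathbf j\in\{0,1\}^n$ with $\chi(\mathbf a)\trianglerighteq_1\mathbf j$, there exists a unique vector $\mathbf b\in\mathbb N^n$ with $\chi(\mathbf b)=\mathbf j$ such that $\mathcal F_{H_\top(n)}(\mathbf a,\mathbf b)$ contains an unsplittable flow; moreover, in that case $\mathcal F_{H_\top(n)}(\mathbf a,\mathbf b)$ contains exactly one unsplittable flow. For all other vectors $\mathbf b\in\mathbb N^n$ (i.e. those for which $\chi(\mathbf a)\trianglerighteq_1\chi(\mathbf b)$ fails, or which are not this unique vector for $\mathbf j=\chi(\mathbf b)$), $\mathcal F_{H_\top(n)}(\mathbf a,\mathbf b)$ has no unsplittable flows.
   Context: $H_\top(n)$ is the directed graph with vertices $(i,-1),(i,0),(i,1)$ for $1\le i\le n$ and a vertex $s$, and arcs $((i,-1),(i,0))$ and $((i,0),(i,1))$ for $1\le i\le n$, $((i,0),(i+1,0))$ for $1\le i\le n-1$, and $((n,0),s)$. $\mathcal F_{H_\top(n)}(\mathbf a,\mathbf b)$ is the set of nonnegative real arc weightings such that at each vertex outflow minus inflow equals its netflow: $a_i$ at $(i,-1)$, $-b_i$ at $(i,1)$, $0$ at $(i,0)$, and $-\sum_ia_i+\sum_ib_i$ at $s$. An unsplittable flow is an integral flow in which no two unit trajectories split; equivalently, an integral flow in which every vertex has at most one outgoing arc with positive flow and no vertex with negative netflow has an outgoing arc with positive flow. $\chi(\mathbf v)_i=1$ if $v_i>0$, else $0$. Dominance $\mathbf v\trianglerighteq\mathbf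 w$: $\sum_{k\le i}v_k\ge\sum_{k\le i}w_k$ for all $i$. For $\mathbf v\trianglerighteq\mathbf w$ with $\chi(\mathbf v)\trianglerighteq\chi(\mathbf w)$, let $Z_{\mathbf v}=\{i:v_i=0\}$, $Z_{\mathbf w}=\{i:w_i=0\}$ and form the matching $M$ by repeatedly matching the largest unmatched $i'\in Z_{\mathbf v}$ to the largest unmatched element of $Z_{\mathbf w}$ that is $\le i'$; $\mathbf v\trianglerighteq_1\mathbf w$ means $\mathbf v\trianglerighteq\mathbf w$, $\chi(\mathbf v)\trianglerighteq\chi(\mathbf w)$ and $i-j\le1$ for all $(i,j)\in M$. *)

(* Defs.v *)
From HB Require Import structures.
From mathcomp Require Import all_boot all_order all_algebra.
From mathcomp Require Import reals.
Set Implicit Arguments. Unset Strict Implicit. Unset Printing Implicit Defensive.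
Import Order.TTheory GRing.Theory Num.Theory.
Local Open Scope ring_scope.

Definition chi (n : nat) (v : 'I_n -> nat) : 'I_n -> nat :=
  fun i => nat_of_bool (0 < v i)%N.

Definition dom (n : nat) (v w : 'I_n -> nat) : Prop :=
  forall i : 'I_n,
    (\sum_(k < n | (k <= i)%N) w k <= \sum_(k < n | (k <= i)%N) v k)%N.

Definition zeros_dec (n : nat) (v : 'I_n -> nat) : seq nat :=
  rev [seq val i | i <- enum 'I_n & v i == 0%N].

(* Greedy matching: take the largest unmatched i' of Z_v (zv is decreasing)
   and match it to the largest unmatched element of Z_w that is <= i'.
   (If no such element exists -- which cannot happen under the standing
   hypothesis chi v |> chi w -- i' is left unmatched.) *)
Fixpoint gmatch (zv zw : seq nat) : seq (nat * nat) :=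
  match zv with
  | [::] => [::]
  | i :: zv' =>
      let c := [seq j <- zw | (j <= i)%N] in
      if c is [::] then gmatch zv' zw
      else let j := (\max_(k <- c) k)%N in (i, j) :: gmatch zv' (rem j zw)
  end.

Definition matchM (n : nat) (v w : 'I_n -> nat) : seq (nat * nat) :=
  gmatch (zeros_dec v) (zeros_dec w).

Definition dom1 (n : nat) (v w : 'I_n -> nat) : Prop :=
  [/\ dom v w, dom (chi v) (chi w) &
      forall p, p \in matchM v w -> (p.1 - p.2 <= 1)%N].

(* Vertices: None = s ; Some (i, k) = (i+1, k-1) in the paper's notation
   (i : 'I_n is 0-based, k : 'I_3 encodes -1, 0, 1 as 0, 1, 2). *)
Definition Hvert (n : nat) : finType := option ('I_n * 'I_3)%type.

Definition Harc (n : nat) (u v : Hvert n) : bool :=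
  match u, v with
  | Some (i, k), Some (i', k') =>
      [|| (i == i') && (val k == 0%N) && (val k' == 1%N),
          (i == i') && (val k == 1%N) && (val k' == 2%N)
        | (val k == 1%N) && (val k' == 1%N) && (val i' == (val i).+1)]
  | Some (i, k), None => (val k == 1%N) && (val i == n.-1)
  | None, _ => false
  end.

Definition Hnet (R : realType) (n : nat) (a b : 'I_n -> nat) (v : Hvert n) : R :=
  match v with
  | Some (i, k) =>
      if val k == 0%N then (a i)%:R
      else if val k == 1%N then 0
      else - (b i)%:R
  | None => - (\sum_(i < n) a i)%:R + (\sum_(i < n) b i)%:R
  end.

Section Flows.
Variables (R : realType) (V : finType) (arc : rel V) (d : V -> R).

Definition netflow (f : V -> V -> R) (v : V) : R :=
  \sum_(w : V) f v w - \sum_(w : V) f w v.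

Definition is_flow (f : V -> V -> R) : Prop :=
  [/\ forall u v, 0 <= f u v,
      forall u v, ~~ arc u v -> f u v = 0
    & forall v, netflow f v = d v].

Definition integral (f : V -> V -> R) : Prop :=
  forall u v, exists k : nat, f u v = k%:R.

Definition unsplittable (f : V -> V -> R) : Prop :=
  [/\ is_flow f, integral f,
      forall v w1 w2, arc v w1 -> arc v w2 -> 0 < f v w1 -> 0 < f v w2 -> w1 = w2
    & forall v w, d v < 0 -> arc v w -> ~ (0 < f v w)].

End Flows.

Definition Hunspl (R : realType) (n : nat) (a b : 'I_n -> nat)
  (f : Hvert n -> Hvert n -> R) : Prop :=
  unsplittable (@Harc n) (Hnet R a b) f.

(* Main.v *)
Require Import Defs.
From HB Require Import structures.
From mathcomp Require Import all_boot all_order all_algebra.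
From mathcomp Require Import reals.
From mathcomp Require Import zify lra.
From Stdlib Require Import FunctionalExtensionality.
Set Implicit Arguments. Unset Strict Implicit. Unset Printing Implicit Defensive.

Fixpoint psum (w : nat -> nat) (x : nat) : nat :=
  match x with 0 => 0 | x'.+1 => psum w x' + w x' end.

Fixpoint qf (J : nat -> nat) (x : nat) : nat :=
  match x with 0 => 0 | x'.+1 => if J x' == 1 then x'.+1 else qf J x' end.

Lemma psum_mono w k x : k <= x -> psum w k <= psum w x.
Proof.
elim: x => [|x IH]; first by rewrite leqn0 => /eqP ->.
rewrite leq_eqVlt => /orP[/eqP -> //|]; rewrite ltnS => /IH /= h; lia.
Qed.

Lemma psum_const w k x : (forall l, k <= l < x -> w l = 0) -> k <= x ->
  psum w x = psum w k.
Proof.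
elim: x => [|x IH] H; first by rewrite leqn0 => /eqP ->.
rewrite leq_eqVlt => /orP[/eqP -> //|]; rewrite ltnS => kx /=.
rewrite IH // ?H ?addn0 //; first by rewrite kx /=.
by move=> l /andP[h1 h2]; apply: H; rewrite h1 /=; lia.
Qed.

Lemma psum_pos w k x : k <= x -> psum w k < psum w x ->
  exists l, k <= l < x /\ 0 < w l.
Proof.
move=> kx lt.
case: (boolP [exists l : 'I_x, (k <= l) && (0 < w l)]).
  by move/existsP=> [l /andP[h1 h2]]; exists l; rewrite h1 ltn_ord.
move/existsPn=> H; rewrite (@psum_const w k x) ?ltnn // in lt.
move=> l /andP[h1 h2]; have := H (Ordinal h2); rewrite /= h1 /=; lia.
Qed.

Lemma psum_le1 w x : (forall y, w y <= 1) -> psum w x <= x.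
Proof. move=> H; elim: x => //= x IH; have := H x; lia. Qed.

Lemma psum_all1 w x : (forall y, y < x -> w y = 1) -> psum w x = x.
Proof.
elim: x => //= x IH H; rewrite IH ?H ?addn1 //; move=> y yx; apply: H; lia.
Qed.

Lemma qf_le J x : qf J x <= x.
Proof. elim: x => //= x IH; case: ifP => // _; exact: leqW. Qed.

Lemma qf_zero J x l : qf J x <= l < x -> J l != 1.
Proof.
elim: x => [|x IH] /=; first lia.
case: ifP => Jx; first lia.
move=> /andP[h1 h2]; case: (ltngtP l x) => h; [ |lia| by subst; rewrite Jx].
by apply: IH; rewrite h1.
Qed.

Lemma qf_min J k x : (forall l, k <= l < x -> J l != 1) -> k <= x -> qf J x <= k.
Proof.
elim: x => [|x IH] H; first by [].
rewrite leq_eqVlt => /orP[/eqP <-|]; first exact: qf_le.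
rewrite ltnS => kx /=; have := H x; rewrite kx ltnSn => /(_ isT) /negbTE ->.
apply: IH => // l /andP[h1 h2]; apply: H; rewrite h1 /=; lia.
Qed.

Lemma qf_last J x : qf J x = 0 \/ J (qf J x).-1 = 1.
Proof.
elim: x => [|x IH] /=; first by left.
by case: ifP => [/eqP|]; [right|].
Qed.

Lemma qf_S J x : qf J x.+1 = if J x == 1 then x.+1 else qf J x.
Proof. by []. Qed.

Definition zl (U : nat -> nat) s := rev [seq x <- iota 0 s | U x == 0].

Lemma zl_S U t : zl U t.+1 = if U t == 0 then t :: zl U t else zl U t.
Proof.
rewrite /zl -addn1 iotaD filter_cat /= add0n.
by case: ifP => _; rewrite ?cats1 ?cats0 ?rev_rcons.
Qed.

Lemma maxc (c : seq nat) y : y \in c -> (forall z, z \in c -> z <= y) ->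
  (\max_(k <- c) k)%N = y.
Proof.
move=> yc H; apply/eqP; rewrite eqn_leq; apply/andP; split.
  by apply/bigmax_leqP_seq => z zc _; exact: H.
exact: (@leq_bigmax_seq _ c xpredT (fun k => k) y yc).
Qed.

Lemma maxmem (c : seq nat) : c != [::] -> (\max_(k <- c) k)%N \in c.
Proof.
elim: c => // x c IH _; rewrite big_cons.
case: c IH => [|y c] IH; first by rewrite big_nil maxn0 mem_head.
have := IH isT; rewrite /maxn; case: ifP => _ h.
  by rewrite in_cons h orbT.
by rewrite mem_head.
Qed.

Lemma mem_rem_neq (x y : nat) s : x != y -> (x \in rem y s) = (x \in s).
Proof.
move=> xy; apply/idP/idP; first exact: mem_rem.
exact: rem_mem.
Qed.

Definition Inv (U J : nat -> nat) s (e : bool) zv (zw : seq nat) :=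
  [/\ zv = zl U s, uniq zw &
      forall x, x < s -> (x \in zw) = (J x == 0) && ~~ (e && (x.+1 == s))].

Definition CC (U J : nat -> nat) s := forall i, i < s -> J i = 1 ->
  exists k, [/\ k <= i, U k = 1 & forall l, k <= l < i -> J l = 0].

Definition EE (U J : nat -> nat) s := exists k, [/\ k < s, U k = 1 &
  forall l, k <= l < s -> J l = 0].

Definition okM (M : seq (nat * nat)) := forall p, p \in M -> p.1 - p.2 <= 1.

Lemma okM_cons p M : okM (p :: M) -> p.1 - p.2 <= 1 /\ okM M.
Proof.
move=> H; split; first by apply: H; rewrite mem_head.
by move=> q qM; apply: H; rewrite inE qM orbT.
Qed.

Lemma Inv_pass U J t e zv zw : Inv U J t.+1 e zv zw -> Inv U J t false (zl U t) zw.
Proof.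
case=> _ uz H; split=> // x xt; rewrite H; last lia.
have -> : (x.+1 == t.+1) = false by apply/eqP; lia.
by rewrite andbF andbT.
Qed.

Lemma Inv_remt U J t e zv zw : Inv U J t.+1 e zv zw ->
  Inv U J t false (zl U t) (rem t zw).
Proof.
case=> _ uz H; split=> //; first exact: rem_uniq.
move=> x xt; rewrite mem_rem_neq; last by apply/eqP; lia.
rewrite H; last lia.
have -> : (x.+1 == t.+1) = false by apply/eqP; lia.
by rewrite andbF andbT.
Qed.

Lemma Inv_rem1 U J t e zv zw : Inv U J t.+2 e zv zw ->
  Inv U J t.+1 true (zl U t.+1) (rem t zw).
Proof.
case=> _ uz H; split=> //; first exact: rem_uniq.
move=> x xt /=; case: (eqVneq x t) => [->|xn].
  by rewrite mem_rem_uniqF // eqxx andbF.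
rewrite mem_rem_neq // H; last lia.
have -> : (x.+1 == t.+2) = false by apply/eqP; lia.
have -> : (x.+1 == t.+1) = false by apply/eqP; lia.
by rewrite !andbF.
Qed.

Lemma psumS w x : psum w x.+1 = psum w x + w x. Proof. by []. Qed.

Lemma B_gm U J (hJ : forall x, J x <= 1) s : forall e zv zw,
  Inv U J s e zv zw -> CC U J s -> (e -> J s.-1 = 0 /\ EE U J s) ->
  okM (gmatch zv zw).
Proof.
elim: s => [|t IH] e zv zw.
  by case=> -> _ _ _ _ p.
move=> Hinv; have [Ezv uz Hzw] := Hinv; move=> HC He.
have HCt : CC U J t by move=> i it; apply: HC; lia.
rewrite Ezv zl_S; case: eqP => Ut; last first.
  by apply: (IH false _ zw (Inv_pass Hinv) HCt).
rewrite /=.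
case: (boolP ((J t == 0) && ~~ e)) => Ht.
  have tz : t \in zw by rewrite Hzw // eqxx andbT.
  case E: [seq y <- zw | y <= t] => [|y c].
    have : t \in [seq y <- zw | y <= t] by rewrite mem_filter leqnn tz.
    by rewrite E.
  have -> : (\max_(k <- y :: c) k)%N = t.
    apply: maxc; first by rewrite -E mem_filter leqnn tz.
    by move=> z; rewrite -E mem_filter => /andP[].
  move=> p; rewrite inE => /orP[/eqP -> /=|]; first by rewrite subnn.
  by apply: (IH false _ _ (Inv_remt Hinv) HCt).
have [t' [Et J0 EEt]] : exists t', [/\ t = t'.+1, J t' = 0 & EE U J t].
  case: (eqVneq (J t) 1) => Jt1.
    have [k [kt Uk Jl]] := HC t (ltnSn t) Jt1.
    have kt' : k != t by apply/eqP => kt0; rewrite kt0 Ut in Uk.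
    exists t.-1; split; first lia.
      by apply: Jl; lia.
    by exists k; split => //; lia.
  have Jt0 : J t = 0 by have := hJ t; move: Jt1; lia.
  have e1 : e by move: Ht; rewrite Jt0 eqxx /= negbK.
  have [_ [k [kt Uk Jl]]] := He e1.
  have kt' : k != t by apply/eqP => kt0; rewrite kt0 Ut in Uk.
  exists t.-1; split; first lia.
    by apply: Jl; lia.
  exists k; split => //; first lia.
  by move=> l /andP[h1 h2]; apply: Jl; lia.
subst t.
have tnot : t'.+1 \notin zw by rewrite Hzw // eqxx andbT.
have t'in : t' \in zw.
  rewrite Hzw // J0 eqxx /=.
  have -> : (t'.+1 == t'.+2) = false by apply/eqP; lia.
  by rewrite andbF.
case E: [seq y <- zw | y <= t'.+1] => [|y c].
  have : t' \in [seq y <- zw | y <= t'.+1] by rewrite mem_filter leqnSn t'in.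
    by rewrite E.
have -> : (\max_(k <- y :: c) k)%N = t'.
  apply: maxc; first by rewrite -E mem_filter leqnSn t'in.
  move=> z; rewrite -E mem_filter => /andP[zt zz].
  have : z != t'.+1 by apply: contraNneq tnot => <-.
  lia.
move=> p; rewrite inE => /orP[/eqP -> /=|]; first by rewrite subSnn.
by apply: (IH true _ _ (Inv_rem1 Hinv) HCt).
Qed.

Lemma A_gm U J (hU : forall x, U x <= 1) (hJ : forall x, J x <= 1) s :
  forall e zv zw, Inv U J s e zv zw -> okM (gmatch zv zw) ->
  (forall x, x <= s -> psum J x <= psum U x) ->
  (e -> [/\ 0 < s, J s.-1 = 0 & (psum J s).+1 <= psum U s]) ->
  CC U J s /\ (e -> EE U J s).
Proof.
elim: s => [|t IH] e zv zw.
  move=> _ _ _ He; split; first by move=> i; rewrite ltn0.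
  by move=> e1; have [] := He e1.
move=> Hinv; have [Ezv uz Hzw] := Hinv; move=> HM HD He.
have HDt : forall x, x <= t -> psum J x <= psum U x by move=> x xt; apply: HD; lia.
have CCext : CC U J t -> (J t = 1 -> exists k, [/\ k <= t, U k = 1 &
    forall l, k <= l < t -> J l = 0]) -> CC U J t.+1.
  move=> H1 H2 i it Ji; case: (ltngtP i t) => [ilt|ilt|eit].
  - exact: H1.
  - lia.
  - by subst i; apply: H2.
move: HM; rewrite Ezv zl_S; case: eqP => Ut HM.
  rewrite /= in HM.
  case: (boolP ((J t == 0) && ~~ e)) => Ht.
    have tz : t \in zw by rewrite Hzw // eqxx andbT.
    move: HM; case E: [seq y <- zw | y <= t] => [|y c] HM.
      have : t \in [seq y <- zw | y <= t] by rewrite mem_filter leqnn tz.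
    by rewrite E.
    have Em : (\max_(k <- y :: c) k)%N = t.
      apply: maxc; first by rewrite -E mem_filter leqnn tz.
      by move=> z; rewrite -E mem_filter => /andP[].
    move: HM; rewrite Em => /okM_cons [_ HM'].
    have [IC _] := IH false _ _ (Inv_remt Hinv) HM' HDt ltac:(by []).
    split.
      apply: CCext IC _ => Jt1; move: Ht; rewrite Jt1 //.
    by move=> e1; move: Ht; rewrite e1 andbF.
  have tnot : t \notin zw by rewrite Hzw // eqxx andbT.
  have JE : (J t = 1 /\ ~~ e) \/ (J t = 0 /\ e).
    case: (boolP e) => e1.
      by right; split=> //; have [_ J0 _] := He e1.
    left; split => //; have := hJ t; move: Ht; rewrite e1 andbT; lia.
  move: HM; case E: [seq y <- zw | y <= t] => [|y c] HM.
    have allJ : forall x, x < t -> J x = 1.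
      move=> x xt; have : x \notin [seq y <- zw | y <= t] by rewrite E.
      rewrite mem_filter (ltnW xt) /= Hzw; last lia.
      have -> : (x.+1 == t.+1) = false by apply/eqP; lia.
      rewrite andbF andbT => h; have := hJ x; move: h; lia.
    have pJ := psum_all1 allJ; have pU := psum_le1 t hU.
    case: JE => [[Jt1 _]|[Jt0 e1]].
      by have := HD t.+1 (leqnn _); rewrite psumS psumS pJ Jt1 Ut; lia.
    by have [_ _ h] := He e1; move: h; rewrite psumS psumS pJ Jt0 Ut; lia.
  have ymem : (\max_(k <- y :: c) k)%N \in [seq y <- zw | y <= t].
    by rewrite E; apply: maxmem.
  move: ymem HM; move: (\max_(k <- y :: c) k)%N => z.
  rewrite mem_filter => /andP[zt zzw] /okM_cons [/= d HM'].
  have ztne : z != t by apply: contraNneq tnot => <-.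
  have Et : t = z.+1 by lia.
  subst t.
  have Jz : J z = 0.
    by move: zzw; rewrite Hzw; [case/andP => /eqP|lia].
  have := IH true _ _ (Inv_rem1 Hinv) HM' HDt.
  case.
    move=> _; split => //.
    case: JE => [[Jt1 _]|[Jt0 e1]].
      by have h := HD z.+2 (leqnn _); rewrite (psumS J z.+1) (psumS U z.+1) Jt1 Ut in h; lia.
    by have [_ _ h] := He e1; rewrite (psumS J z.+1) (psumS U z.+1) Jt0 Ut in h; lia.
  move=> IC IE; have [k [kz Uk Jl]] := IE isT.
  split.
    apply: CCext IC _ => Jt1; exists k; split => //; lia.
  move=> e1; have Jt0 : J z.+1 = 0.
    by case: JE => [[_ ne]|[]//]; rewrite e1 in ne.
  exists k; split => //; first lia.
  move=> l /andP[h1 h2]; case: (ltngtP l z.+1) => h.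
  - by apply: Jl; lia.
  - lia.
  - by rewrite h.
have U1 : U t = 1 by have := hU t; move/eqP: Ut; lia.
have [IC _] := IH false _ _ (Inv_pass Hinv) HM HDt ltac:(by []).
split.
  apply: CCext IC _ => _; exists t; split => //; lia.
move=> e1; have [_ J0 _] := He e1.
exists t; split => //.
move=> l /andP[h1 h2]; have -> : l = t by lia.
exact: J0.
Qed.

Definition Pb (n : nat) (A B : nat -> nat) := forall x, x < n ->
  psum B x.+1 <= psum A x.+1 /\ (B x = 0 \/ psum B x.+1 = psum A x.+1).

Definition posn (w : nat -> nat) := fun x => nat_of_bool (0 < w x).

Lemma posn_le1 w x : posn w x <= 1.
Proof. by rewrite /posn; case: (0 < w x). Qed.

Lemma posn_ne1 w x : posn w x != 1 -> w x = 0.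
Proof. by rewrite /posn; case: (ltnP 0 (w x)) => //; lia. Qed.

Lemma P_CC n A B : Pb n A B -> CC (posn A) (posn B) n.
Proof.
move=> HP i iN Ji.
have Bi : 0 < B i by move: Ji; rewrite /posn; case: (0 < B i).
have qi := qf_le (posn B) i.
have Eq : psum B (qf (posn B) i) = psum A (qf (posn B) i).
  case: (qf_last (posn B) i) => [->//|].
  move: qi; case: (qf (posn B) i) => [//|p] pi /= Jp.
  have Bp : 0 < B p by move: Jp; rewrite /posn; case: (0 < B p).
  have [_ [B0|E2]] := HP p ltac:(lia); [lia|exact: E2].
have Bz : forall l, qf (posn B) i <= l < i -> B l = 0.
  by move=> l h; apply: posn_ne1; apply: qf_zero h.
have E1 := psum_const Bz qi.
have [_ [B0|E2]] := HP i iN; first lia.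
have lt : psum A (qf (posn B) i) < psum A i.+1 by rewrite -E2 -Eq psumS E1; lia.
have [k [kr Ak]] := psum_pos (leqW qi) lt.
exists k; split; first lia.
  by rewrite /posn Ak.
move=> l h; have : posn B l != 1 by apply: (@qf_zero _ i); lia.
by rewrite /posn; case: (0 < B l).
Qed.

Lemma P_uniq n A B B' : Pb n A B -> Pb n A B' ->
  (forall x, x < n -> (0 < B x) = (0 < B' x)) -> forall x, x < n -> B x = B' x.
Proof.
move=> HP HP' Hpos.
have S : forall x, x <= n -> psum B x = psum B' x.
  elim=> // x IH xn; have [_ h] := HP x xn; have [_ h'] := HP' x xn.
  have Hp := Hpos x xn; rewrite !psumS.
  case: (posnP (B x)) => [B0|Bp].
    have B0' : B' x = 0 by move: Hp; rewrite B0 /=; case: (B' x).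
    by rewrite B0 B0' IH //; lia.
  have Bp' : 0 < B' x by rewrite -Hp.
  case: h => [|h]; first lia.
  case: h' => [|h']; first lia.
  have := IH (ltnW xn); have := psumS B x; have := psumS B' x; lia.
move=> x xn; have := S x (ltnW xn); have := S x.+1 xn; rewrite psumS psumS; lia.
Qed.

Definition Bdef (A J : nat -> nat) x :=
  if J x == 1 then psum A x.+1 - psum A (qf J x) else 0.

Lemma Bdef_psum A J x : psum (Bdef A J) x = psum A (qf J x).
Proof.
elim: x => // x IH; rewrite psumS IH /Bdef qf_S.
case: eqP => _; last by rewrite addn0.
have := psum_mono A (leqW (qf_le J x)); lia.
Qed.

Lemma Bdef_P n A J : Pb n A (Bdef A J).
Proof.
move=> x _; rewrite !Bdef_psum; split; first exact/psum_mono/qf_le.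
rewrite /Bdef qf_S; case: eqP => _; [by right|by left].
Qed.

Lemma Bdef_pos n A J : CC (posn A) J n ->
  forall x, x < n -> (0 < Bdef A J x) = (J x == 1).
Proof.
move=> HC x xn; rewrite /Bdef; case: eqP => Jx //.
have [k [ki Ak Jl]] := HC x xn Jx.
have q : qf J x <= k.
  by apply: qf_min => // l h; rewrite Jl.
have h1 := psum_mono A q; have h2 := psum_mono A (ki : k < x.+1).
have Ak' : 0 < A k by move: Ak; rewrite /posn; case: (0 < A k).
rewrite psumS in h2; apply/idP; lia.
Qed.

Lemma CC_dom U J s : (forall x, J x <= 1) -> CC U J s ->
  forall x, x <= s -> psum J x <= psum U x.
Proof.
move=> hJ HC.
suff H : forall x, x <= s -> psum J x <= psum U x /\
  ((exists k, qf J x <= k < x /\ U k = 1) -> psum J x < psum U x).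
  by move=> x xs; case: (H x xs).
elim=> [|x IH] xs; first by split => // [[k [h _]]]; lia.
have [I1 I2] := IH (ltnW xs).
rewrite qf_S !psumS; case: (eqVneq (J x) 1) => Jx.
  rewrite Jx.
  split; last by move=> [k [h _]]; lia.
  have [k [kx Uk Jl]] := HC x xs Jx.
  case: (ltngtP k x) kx => // [kx|ekx] _.
    have : qf J x <= k by apply: qf_min; [move=> l h; rewrite Jl|lia].
    move=> q; have := I2 (ex_intro _ k (conj (introT andP (conj q kx)) Uk)); lia.
  by subst k; rewrite Uk; lia.
idtac.
have J0 : J x = 0 by have := hJ x; move: Jx; lia.
rewrite J0; split; first lia.
move=> [k [/andP[h1 h2] Uk]]; case: (ltngtP k x) => h.
- have := I2 (ex_intro _ k (conj (introT andP (conj h1 h)) Uk)); lia.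
- lia.
- by subst k; rewrite Uk; lia.
Qed.

Lemma psum_big (w : nat -> nat) x : psum w x = \sum_(y < x) w y.
Proof. by elim: x => [|x IH]; rewrite ?big_ord0 // big_ord_recr /= IH. Qed.

Lemma br1 m (v : 'I_m.+1 -> nat) (i : 'I_m.+1) :
  \sum_(k < m.+1 | (k <= i)%N) v k = psum (fun x => v (inord x)) i.+1.
Proof.
rewrite psum_big (big_ord_widen m.+1 (fun y => v (inord y))) ?ltn_ord //.
by apply: eq_big => [k|k _]; [rewrite ltnS|rewrite inord_val].
Qed.

Lemma br2 m (v : 'I_m.+1 -> nat) :
  \sum_(k < m.+1) v k = psum (fun x => v (inord x)) m.+1.
Proof. by rewrite psum_big; apply: eq_bigr => k _; rewrite inord_val. Qed.

Lemma dom_iff m (v w : 'I_m.+1 -> nat) : dom v w <->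
  (forall x, x <= m.+1 -> psum (fun x => w (inord x)) x <= psum (fun x => v (inord x)) x).
Proof.
split.
  move=> H [|y] ym //; have := H (inord y); rewrite !br1 inordK //.
move=> H i; rewrite !br1; exact: H.
Qed.

Lemma br3 m (v : 'I_m.+1 -> nat) : zeros_dec v = zl (fun x => v (inord x)) m.+1.
Proof.
rewrite /zeros_dec /zl -val_enum_ord filter_map; congr rev; congr map.
by apply: eq_filter => i /=; rewrite inord_val.
Qed.

Lemma Inv_init U J s : Inv U J s false (zl U s) (zl J s).
Proof.
split => //; first by rewrite /zl rev_uniq filter_uniq // iota_uniq.
by move=> x xs; rewrite /zl mem_rev mem_filter mem_iota xs /= andbT.
Qed.

Module M4.
Import Order.TTheory GRing.Theory Num.Theory.

Definition k0 : 'I_3 := @Ordinal 3 0 isT.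
Definition k1 : 'I_3 := @Ordinal 3 1 isT.
Definition k2 : 'I_3 := @Ordinal 3 2 isT.

Lemma ord3E (k : 'I_3) : k = k0 \/ k = k1 \/ k = k2.
Proof.
case: k => [[|[|[|k]]] p]; [left|right;left|right;right|by []];
  by apply: val_inj.
Qed.

Section V.
Variable m : nat.
Definition srcv (x : nat) : Hvert m.+1 := Some (inord x, k0).
Definition midv (x : nat) : Hvert m.+1 := Some (inord x, k1).
Definition snkv (x : nat) : Hvert m.+1 := Some (inord x, k2).
Definition nxtv (x : nat) : Hvert m.+1 := if x == m then None else midv x.+1.

Lemma inord_inj x y : x < m.+1 -> y < m.+1 -> (inord x : 'I_m.+1) = inord y -> x = y.
Proof. by move=> hx hy /(congr1 (@nat_of_ord _)); rewrite !inordK. Qed.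

Lemma arc_cases (u w : Hvert m.+1) : Harc u w -> exists2 x, x < m.+1 &
  [\/ u = srcv x /\ w = midv x, u = midv x /\ w = snkv x | u = midv x /\ w = nxtv x].
Proof.
case: u => [[i k]|] //; case: w => [[i' k']|] //.
  case: (ord3E k) => [->|[->|->]]; case: (ord3E k') => [->|[->|->]];
  rewrite /Harc /= ?andbF ?andbT ?orbF //=.
  - move/eqP => <-; exists i => //; apply: Or31; by rewrite /srcv /midv inord_val.
  - move/eqP => h.
    exists i => //; apply: Or33; rewrite /midv /nxtv inord_val; split => //.
    have : (i : nat) != m by have := ltn_ord i'; rewrite h; lia.
    by move/negbTE => ->; congr Some; congr pair; apply: val_inj; rewrite /= inordK // -h.
  - move/eqP => <-; exists i => //; apply: Or32; by rewrite /midv /snkv inord_val.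
case: (ord3E k) => [->|[->|->]]; rewrite /Harc //= => /eqP h.
exists i => //; apply: Or33; rewrite /midv /nxtv inord_val h eqxx; split => //.
Qed.

Lemma arc_src x : x < m.+1 -> Harc (srcv x) (midv x).
Proof. by move=> _; rewrite /Harc /= eqxx. Qed.
Lemma arc_snk x : x < m.+1 -> Harc (midv x) (snkv x).
Proof. by move=> _; rewrite /Harc /= eqxx. Qed.
Lemma arc_nxt x : x < m.+1 -> Harc (midv x) (nxtv x).
Proof.
move=> xm; rewrite /nxtv; case: eqP => [->|ne]; first by rewrite /Harc /= inordK.
by rewrite /Harc /= !inordK ?eqxx ?orbT //; lia.
Qed.

Lemma nxtv_lt x : x < m -> nxtv x = midv x.+1.
Proof. by rewrite /nxtv => h; case: eqP => //; lia. Qed.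

End V.

End M4.
Import M4.

Module M5.
Import Order.TTheory GRing.Theory Num.Theory.
Local Open Scope ring_scope.

Section S.
Variable R : realType.

Lemma sum0 (V : finType) (F : V -> R) (P : pred V) :
  (forall w, ~~ P w -> F w = 0) -> (forall w, ~~ P w) -> \sum_w F w = 0.
Proof. by move=> HF HP; apply: big1 => w _; apply: HF. Qed.

Lemma sum1 (V : finType) (F : V -> R) (P : pred V) w0 :
  (forall w, ~~ P w -> F w = 0) -> (forall w, P w -> w = w0) -> \sum_w F w = F w0.
Proof.
move=> HF HP; rewrite (bigD1 w0) //= big1 ?addr0 // => w ne; apply: HF.
by apply/negP => /HP e; rewrite e eqxx in ne.
Qed.

Lemma sum2 (V : finType) (F : V -> R) (P : pred V) w0 w1 : w0 != w1 ->
  (forall w, ~~ P w -> F w = 0) -> (forall w, P w -> w = w0 \/ w = w1) ->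
  \sum_w F w = F w0 + F w1.
Proof.
move=> n01 HF HP; rewrite (bigD1 w0) //= (bigD1 w1) 1?eq_sym //= big1 ?addr0 //.
move=> w Hw; apply: HF; apply/negP => /HP [] e;
  by rewrite e eqxx /= ?andbF in Hw.
Qed.
End S.

Ltac discr h := move: h; rewrite ?/nxtv; try case: (_ == _); by case.

Section N.
Variables (R : realType) (m : nat).
Implicit Types (x y : nat).

Lemma inj_src x y : (x < m.+1)%N -> (y < m.+1)%N -> srcv m x = srcv m y -> x = y.
Proof. by move=> hx hy [] /inord_inj; apply. Qed.
Lemma inj_mid x y : (x < m.+1)%N -> (y < m.+1)%N -> midv m x = midv m y -> x = y.
Proof. by move=> hx hy [] /inord_inj; apply. Qed.
Lemma inj_snk x y : (x < m.+1)%N -> (y < m.+1)%N -> snkv m x = snkv m y -> x = y.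
Proof. by move=> hx hy [] /inord_inj; apply. Qed.
Lemma ne_src_mid x y : srcv m x <> midv m y. Proof. by case. Qed.
Lemma ne_src_snk x y : srcv m x <> snkv m y. Proof. by case. Qed.
Lemma ne_mid_snk x y : midv m x <> snkv m y. Proof. by case. Qed.
Lemma ne_src_nxt x y : srcv m x <> nxtv m y.
Proof. by rewrite /nxtv; case: eqP => // _ []. Qed.
Lemma ne_snk_nxt x y : snkv m x <> nxtv m y.
Proof. by rewrite /nxtv; case: eqP => // _ []. Qed.
Lemma ne_mid_None x : midv m x <> None. Proof. by []. Qed.

Variable f : Hvert m.+1 -> Hvert m.+1 -> R.
Hypothesis Hz : forall u v, ~~ Harc u v -> f u v = 0.

Lemma NF_src x : (x < m.+1)%N -> netflow f (srcv m x) = f (srcv m x) (midv m x).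
Proof.
move=> xm; rewrite /netflow (@sum1 _ _ _ (Harc (srcv m x)) (midv m x)).
- rewrite (@sum0 _ _ _ (fun w => Harc w (srcv m x))) ?subr0 //.
    by move=> w; apply: Hz.
  move=> w; apply/negP => /arc_cases [y ym [[_ h]|[_ h]|[_ h]]].
  + by discr h.
  + by discr h.
  + by discr h.
- by move=> w; apply: Hz.
move=> w /arc_cases [y ym [[h1 h2]|[h1 _]|[h1 _]]].
- by rewrite h2 (inj_src ym xm (esym h1)).
- by discr h1.
- by discr h1.
Qed.

Lemma NF_snk x : (x < m.+1)%N -> netflow f (snkv m x) = - f (midv m x) (snkv m x).
Proof.
move=> xm; rewrite /netflow (@sum0 _ _ _ (Harc (snkv m x))).
- rewrite (@sum1 _ _ _ (fun w => Harc w (snkv m x)) (midv m x)) ?sub0r //.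
    by move=> w; apply: Hz.
  move=> w /arc_cases [y ym [[_ h]|[h1 h]|[_ h]]].
  + by discr h.
  + by rewrite h1 (inj_snk ym xm (esym h)).
  + by discr h.
- by move=> w; apply: Hz.
move=> w; apply/negP => /arc_cases [y ym [[h _]|[h _]|[h _]]].
- by discr h.
- by discr h.
- by discr h.
Qed.

Lemma NF_s : netflow f None = - f (midv m m) None.
Proof.
rewrite /netflow (@sum0 _ _ _ (Harc None)).
- rewrite (@sum1 _ _ _ (fun w => Harc w None) (midv m m)) ?sub0r //.
    by move=> w; apply: Hz.
  move=> w /arc_cases [y ym [[_ h]|[_ h]|[h1 h]]] //.
  move: h; rewrite /nxtv; case: eqP => // e _; by rewrite h1 e.
- by move=> w; apply: Hz.
by move=> w.
Qed.

Lemma ne_snk_nxt' x : snkv m x != nxtv m x.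
Proof. by apply/eqP; apply: ne_snk_nxt. Qed.

Lemma out_mid x : (x < m.+1)%N -> \sum_w f (midv m x) w =
  f (midv m x) (snkv m x) + f (midv m x) (nxtv m x).
Proof.
move=> xm; apply: (@sum2 _ _ _ (Harc (midv m x))); first exact: ne_snk_nxt'.
  by move=> w; apply: Hz.
move=> w /arc_cases [y ym [[h _]|[h1 h]|[h1 h]]].
- by discr h.
- by left; rewrite h (inj_mid ym xm (esym h1)).
- by right; rewrite h (inj_mid ym xm (esym h1)).
Qed.

Lemma NF_mid0 : netflow f (midv m 0) =
  f (midv m 0) (snkv m 0) + f (midv m 0) (nxtv m 0) - f (srcv m 0) (midv m 0).
Proof.
rewrite /netflow out_mid //; congr (_ - _).
apply: (@sum1 _ _ _ (fun w => Harc w (midv m 0))); first by move=> w; apply: Hz.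
move=> w /arc_cases [y ym [[h1 h]|[_ h]|[h1 h]]].
- by rewrite h1 (inj_mid ym (ltn0Sn m) (esym h)).
- by discr h.
- move: h; rewrite /nxtv; case: eqP => // ne /inj_mid h.
  have yx : (y.+1 < m.+1)%N by lia.
  by have := h (ltn0Sn m) yx.
Qed.

Lemma NF_midS x : (x < m)%N -> netflow f (midv m x.+1) =
  f (midv m x.+1) (snkv m x.+1) + f (midv m x.+1) (nxtv m x.+1)
  - (f (srcv m x.+1) (midv m x.+1) + f (midv m x) (midv m x.+1)).
Proof.
move=> xm; have xm1 : (x.+1 < m.+1)%N by lia.
rewrite /netflow out_mid //; congr (_ - _).
apply: (@sum2 _ _ _ (fun w => Harc w (midv m x.+1))).
- by apply/eqP => h; discr h.
- by move=> w; apply: Hz.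
move=> w /arc_cases [y ym [[h1 h]|[_ h]|[h1 h]]].
- by left; rewrite h1 (inj_mid ym xm1 (esym h)).
- by discr h.
- right; rewrite h1; move: h; rewrite /nxtv; case: eqP => // ne /inj_mid h.
  have yx : (y.+1 < m.+1)%N by lia.
  by have := h xm1 yx => -[->].
Qed.

End N.

End M5.
Import M5.

Module M6.
Import Order.TTheory GRing.Theory Num.Theory.
Local Open Scope ring_scope.

Section F.
Variables (R : realType) (m : nat) (a b : 'I_m.+1 -> nat).
Let An x := a (inord x).
Let Bn x := b (inord x).

Lemma src_out x w : (x < m.+1)%N -> Harc (srcv m x) w -> w = midv m x.
Proof.
move=> xm /arc_cases [y ym [[h1 h2]|[h1 _]|[h1 _]]]; try by discr h1.
by rewrite h2 (inj_src ym xm (esym h1)).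
Qed.

Lemma mid_out x w : (x < m.+1)%N -> Harc (midv m x) w -> w = snkv m x \/ w = nxtv m x.
Proof.
move=> xm /arc_cases [y ym [[h1 h2]|[h1 h2]|[h1 h2]]]; first by discr h1.
  by left; rewrite h2 (inj_mid ym xm (esym h1)).
by right; rewrite h2 (inj_mid ym xm (esym h1)).
Qed.

Lemma flow_vals f : is_flow (@Harc m.+1) (Hnet R a b) f -> forall x, (x < m.+1)%N ->
  [/\ f (srcv m x) (midv m x) = (An x)%:R, f (midv m x) (snkv m x) = (Bn x)%:R &
      f (midv m x) (nxtv m x) = (psum An x.+1)%:R - (psum Bn x.+1)%:R].
Proof.
case=> H0 Hz Hn.
have S x : (x < m.+1)%N -> f (srcv m x) (midv m x) = (An x)%:R.
  by move=> xm; rewrite -NF_src // Hn.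
have K x : (x < m.+1)%N -> f (midv m x) (snkv m x) = (Bn x)%:R.
  by move=> xm; apply: oppr_inj; rewrite -NF_snk // Hn.
move=> x xm; split; [exact: S|exact: K|].
elim: x xm => [|x IH] xm.
  have := Hn (midv m 0); rewrite NF_mid0 // S // K //= !add0n.
  lra.
have xm' : (x < m)%N by lia.
have := Hn (midv m x.+1); rewrite NF_midS // S // K //.
rewrite -[X in f (midv m x) X](nxtv_lt xm') IH; last lia.
rewrite (psumS An x.+1) (psumS Bn x.+1) !natrD /=; lra.
Qed.

Lemma flow_P f : @Hunspl R _ a b f -> Pb m.+1 An Bn.
Proof.
case=> Hf _ Hsp _ x xm; have [_ Kb G] := flow_vals Hf xm.
have [H0 _ _] := Hf.
have g0 := H0 (midv m x) (nxtv m x); rewrite G subr_ge0 ler_nat in g0.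
split => //.
case: (posnP (Bn x)) => [|Bp]; first by left.
right; apply/eqP; rewrite eqn_leq g0 /=.
have : ~ (0 < f (midv m x) (nxtv m x)).
  move=> gp; have := Hsp _ _ _ (arc_snk xm) (arc_nxt xm).
  by rewrite Kb ltr0n Bp => /(_ isT gp) /eqP; rewrite (negbTE (ne_snk_nxt' _ _)).
rewrite G subr_gt0 ltr_nat => /negP; rewrite -leqNgt.
done.
Qed.

Definition gv (i : 'I_m.+1) : R := (psum An i.+1 - psum Bn i.+1)%:R.
Definition fval (u w : Hvert m.+1) : R :=
  match u with
  | Some (i, k) =>
      if val k == 0%N then (a i)%:R
      else match w with
           | Some (_, k') => if val k' == 2%N then (b i)%:R else gv i
           | None => gv i end
  | None => 0 end.
Definition fdef (u w : Hvert m.+1) : R := if Harc u w then fval u w else 0.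

Lemma fdef_src x : (x < m.+1)%N -> fdef (srcv m x) (midv m x) = (An x)%:R.
Proof. by move=> xm; rewrite /fdef arc_src. Qed.
Lemma fdef_snk x : (x < m.+1)%N -> fdef (midv m x) (snkv m x) = (Bn x)%:R.
Proof. by move=> xm; rewrite /fdef arc_snk. Qed.
Lemma fdef_nxt x : (x < m.+1)%N ->
  fdef (midv m x) (nxtv m x) = (psum An x.+1 - psum Bn x.+1)%:R.
Proof.
move=> xm; rewrite /fdef arc_nxt // /fval /= /gv inordK //.
by rewrite /nxtv; case: eqP.
Qed.

Lemma fdef_nat u w : exists k : nat, fdef u w = k%:R.
Proof.
rewrite /fdef; case: ifP => _; last by exists 0%N.
rewrite /fval; case: u => [[i k]|]; last by exists 0%N.
case: ifP => _; first by eexists.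
case: w => [[i' k']|]; [case: ifP => _|]; by eexists.
Qed.

Hypothesis HP : Pb m.+1 An Bn.

Lemma fdef_gv x : (x < m.+1)%N ->
  fdef (midv m x) (nxtv m x) = (psum An x.+1)%:R - (psum Bn x.+1)%:R.
Proof. by move=> xm; rewrite fdef_nxt // natrB //; case: (HP xm). Qed.

Lemma fdef_flow : is_flow (@Harc m.+1) (Hnet R a b) fdef.
Proof.
have Hz : forall u v, ~~ Harc u v -> fdef u v = 0 by move=> u v /negbTE h; rewrite /fdef h.
split => //.
  by move=> u v; have [k ->] := fdef_nat u v; rewrite ler0n.
case=> [[i k]|]; last first.
  rewrite NF_s //.
  have := fdef_gv (ltnSn m); rewrite /nxtv eqxx => ->.
  by rewrite /= !br2 /=; lra.
have im := ltn_ord i.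
case: (ord3E k) => [->|[->|->]].
- have -> : Some (i, k0) = srcv m i by rewrite /srcv inord_val.
  by rewrite NF_src // fdef_src // /An /= !inord_val.
- case Ei: (nat_of_ord i) => [|x].
    have ei : i = inord 0 by apply: val_inj; rewrite /= inordK // Ei.
    have -> : Some (i, k1) = midv m 0 by rewrite /midv -ei.
    rewrite NF_mid0 // fdef_src // fdef_snk // fdef_gv // /= !add0n.
    by rewrite /=; lra.
  have ei : i = inord x.+1 by apply: val_inj; rewrite /= inordK -Ei.
  have -> : Some (i, k1) = midv m x.+1 by rewrite /midv -ei.
  have xm : (x < m)%N by lia.
  rewrite NF_midS // fdef_src // fdef_snk // fdef_gv //.
  rewrite -[X in fdef (midv m x) X](nxtv_lt xm) fdef_gv; last lia.
  rewrite /= !natrD; lra.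
- have -> : Some (i, k2) = snkv m i by rewrite /snkv inord_val.
  by rewrite NF_snk // fdef_snk // /Bn /= !inord_val.
Qed.

Lemma fdef_unspl : @Hunspl R _ a b fdef.
Proof.
split; first exact: fdef_flow.
- by move=> u v; have [k ->] := fdef_nat u v; exists k.
- move=> v w1 w2 a1 a2 p1 p2.
  case/arc_cases: a1 (a1) => y ym [[ev ew]|[ev ew]|[ev ew]]; subst v => a1.
  + by rewrite (src_out ym a1) (src_out ym a2).
  + case: (mid_out ym a2) => e2; first by rewrite ew e2.
    exfalso; move: p1 p2; rewrite ew e2 fdef_snk // fdef_gv // ltr0n subr_gt0 ltr_nat.
    by case: (HP ym) => _ [->//|->]; rewrite ltnn.
  + case: (mid_out ym a2) => e2; last by rewrite ew e2.
    exfalso; move: p1 p2; rewrite ew e2 fdef_snk // fdef_gv // ltr0n subr_gt0 ltr_nat.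
    by case: (HP ym) => _ [->//|->]; rewrite ltnn.
- move=> v w neg /arc_cases [y ym [[ev _]|[ev _]|[ev _]]]; subst v;
    move: neg => //=.
  all: by rewrite ?ltxx // ltNge ler0n.
Qed.

End F.

Lemma flow_unique (R : realType) m (a b : 'I_m.+1 -> nat) f1 f2 :
  is_flow (@Harc m.+1) (Hnet R a b) f1 -> is_flow (@Harc m.+1) (Hnet R a b) f2 ->
  f1 = f2.
Proof.
move=> H1 H2; apply: functional_extensionality => u.
apply: functional_extensionality => w.
case: (boolP (Harc u w)) => h; last first.
  by case: H1 => _ -> //; case: H2 => _ -> //.
case/arc_cases: h => y ym [[-> ->]|[-> ->]|[-> ->]];
  have [s1 k1 g1] := flow_vals H1 ym; have [s2 k2 g2] := flow_vals H2 ym; congruence.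
Qed.

End M6.
Import M6.
Import Order.TTheory GRing.Theory Num.Theory.

Lemma psum_ext w w' x : (forall y, y < x -> w y = w' y) -> psum w x = psum w' x.
Proof.
elim: x => // x IH H; rewrite !psumS H // IH // => y yx; apply: H; lia.
Qed.

Lemma Pb_ext n A B B' : (forall x, x < n -> B x = B' x) -> Pb n A B -> Pb n A B'.
Proof.
move=> E HP x xn; have [h1 h2] := HP x xn.
rewrite -(psum_ext (w := B)); last by move=> y yx; apply: E; lia.
by rewrite -E.
Qed.

Lemma chi_eq n (v w : 'I_n -> nat) i : chi v i = chi w i -> (0 < v i) = (0 < w i).
Proof. by rewrite /chi; case: (0 < v i); case: (0 < w i). Qed.

Lemma chichi n (v : 'I_n -> nat) : chi (chi v) = chi v.
Proof.
by apply: functional_extensionality => i; rewrite /chi; case: (0 < v i).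
Qed.

Theorem lemma5p12 (R : realType) (n : nat) (hn : (0 < n)%N) (a : 'I_n -> nat) :
  (forall j : 'I_n -> nat, (forall i, (j i <= 1)%N) -> dom1 (chi a) j ->
     exists b : 'I_n -> nat,
       [/\ chi b =1 j,
           (exists! f : Hvert n -> Hvert n -> R, Hunspl a b f)
         & forall b' : 'I_n -> nat, chi b' =1 j ->
             (exists f : Hvert n -> Hvert n -> R, Hunspl a b' f) -> b' =1 b])
  /\
  (forall b : 'I_n -> nat, ~ dom1 (chi a) (chi b) ->
     forall f : Hvert n -> Hvert n -> R, ~ Hunspl a b f).
Proof.
case: n hn a => [//|m] _ a.
pose An := fun x => a (inord x).
split.
- move=> j hj [Hd _ HM].
  pose J := fun x => j (inord x).
  have hJ : forall x, J x <= 1 by move=> x; exact: hj.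
  have hU : forall x, posn An x <= 1 := posn_le1 An.
  have HD : forall x, x <= m.+1 -> psum J x <= psum (posn An) x :=
    proj1 (dom_iff _ _) Hd.
  have HM' : okM (gmatch (zl (posn An) m.+1) (zl J m.+1)).
    by move: HM; rewrite /matchM !br3.
  have [HC _] := A_gm hU hJ (Inv_init _ _ _) HM' HD ltac:(by []).
  pose bn := Bdef An J.
  pose b := fun i : 'I_m.+1 => bn i.
  have HPb : Pb m.+1 An (fun x => b (inord x)).
    apply: (@Pb_ext _ _ (Bdef An J)); last exact: Bdef_P.
    by move=> x xm; rewrite /b /bn inordK.
  have Hchi : chi b =1 j.
    move=> i; rewrite /chi /b /bn (Bdef_pos HC (ltn_ord i)) /J inord_val.
    by have := hj i; case: (j i) => [|[|]].
  exists b; split => //.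
    exists (fdef R a b); split; first exact: fdef_unspl.
    move=> g Hg; apply: flow_unique; first exact: fdef_flow.
    by case: Hg.
  move=> b' Hb' [f Hf] i.
  have HP' := flow_P Hf.
  have pos : forall x, x < m.+1 -> (0 < b' (inord x)) = (0 < b (inord x)).
    by move=> x _; apply: chi_eq; rewrite Hb' Hchi.
  by have := P_uniq HP' HPb pos (ltn_ord i); rewrite !inord_val.
- move=> b Hnd f Hf; apply: Hnd.
  have HP := flow_P Hf.
  have HC := P_CC HP.
  have HD := CC_dom (posn_le1 _) HC.
  split.
  + exact: (proj2 (dom_iff _ _) HD).
  + rewrite !chichi; exact: (proj2 (dom_iff _ _) HD).
  + move=> p; rewrite /matchM !br3.
    exact: (@B_gm (posn An) (posn (fun x => b (inord x))) (posn_le1 _) m.+1 false _ _ (Inv_init _ _ _) HC ltac:(by []) p).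
Qed.
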